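(* Let $f: \mathbb{R}^n \to \mathbb{R}^n$ be topical. There exists $1 \le i \le n$ such that $\lim_{k\to\infty} f^k_i(y)/k = \overline{\chi}(f)$ for all $y \in \mathbb{R}^n$.
   Context: $f$ is topical if $f(x+h) = f(x)+h$ for all $h\in\mathbb{R}$ (scalar added to each coordinate) and $x\le y$ componentwise implies $f(x)\le f(y)$. The upper cycle time is $\overline{\chi}(f) = \lim_{k\to\infty} \max_i f^k_i(x)/k$, which exists and is independent of $x$. *)

(* Defs.v *)
From HB Require Import structures.
From mathcomp Require Import all_boot all_order all_algebra.
From mathcomp Require Import all_classical all_reals all_analysis.
Set Implicit Arguments. Unset Strict Implicit. Unset Printing Implicit Defensive.
Import Order.TTheory GRing.Theory Num.Theory.
Import numFieldNormedType.Exports.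
Local Open Scope ring_scope.

(* Vectors of R^(n+1) are functions 'I_n.+1 -> R (coordinates 0..n). *)

Definition topical (R : realType) (n : nat)
    (f : ('I_n -> R) -> ('I_n -> R)) : Prop :=
  (forall (x : 'I_n -> R) (h : R), f (fun i => x i + h) = (fun i => f x i + h)) /\
  (forall x y : 'I_n -> R, (forall i, x i <= y i) -> forall i, f x i <= f y i).

Definition vmax (R : realType) (n : nat) (x : 'I_n.+1 -> R) : R :=
  \big[Num.max/x ord0]_(i < n.+1) x i.

(* upper cycle time: lim_k max_i f^k_i(x)/k, taken at x = 0 (the limit exists
   and is independent of x). *)
Definition upper_cycle_time (R : realType) (n : nat)
    (f : ('I_n.+1 -> R) -> ('I_n.+1 -> R)) : R :=
  limn (fun k : nat => vmax (iter k f (fun _ => 0)) / k%:R).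

(* Main.v *)
Require Import Defs.
From HB Require Import structures.
From mathcomp Require Import all_boot all_order all_algebra.
From mathcomp Require Import all_classical all_reals all_analysis.
From mathcomp Require Import ring lra.
Import Order.TTheory GRing.Theory Num.Theory.
Import numFieldNormedType.Exports.
Local Open Scope ring_scope.
Local Open Scope classical_set_scope.

Definition ev (P : nat -> Prop) := exists N, forall n, (N <= n)%N -> P n.

Lemma evE (P : nat -> Prop) : (\forall n \near \oo, P n) <-> ev P.
Proof.
split.
- case=> N _ HN; exists N => n Hn; apply: HN; exact Hn.
- case=> N HN; exists N => // n Hn; exact: HN.
Qed.

Lemma ev_and (P Q : nat -> Prop) : ev P -> ev Q -> ev (fun n => P n /\ Q n).
Proof.
case=> N1 H1 [N2 H2]; exists (maxn N1 N2) => n Hn; split.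
- by apply: H1; apply: leq_trans Hn; rewrite leq_maxl.
- by apply: H2; apply: leq_trans Hn; rewrite leq_maxr.
Qed.

Lemma ev_mono (P Q : nat -> Prop) : (forall n, P n -> Q n) -> ev P -> ev Q.
Proof. by move=> PQ [N H]; exists N => n /H /PQ. Qed.

Lemma ev_forall (I : finType) (P : I -> nat -> Prop) :
  (forall i, ev (P i)) -> ev (fun n => forall i, P i n).
Proof.
move=> H; apply/evE.
have := @filter_forall nat I (fun i => [set n | P i n]) (\oo) _.
apply => i; apply/evE; exact: H.
Qed.

Lemma ev_sub (P : nat -> Prop) (phi : nat -> nat) :
  (forall k, (k <= phi k)%N) -> ev P -> ev (fun k => P (phi k)).
Proof.
move=> Hphi [N H]; exists N => k Hk; apply: H; exact: leq_trans Hk (Hphi k).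
Qed.

Lemma ev_ge (m : nat) : ev (fun n => (m <= n)%N).
Proof. by exists m. Qed.

Lemma ev_ex (P : nat -> Prop) : ev P -> exists n, P n.
Proof. by case=> N H; exists N; apply: H. Qed.

Definition cv {R : realType} (w : nat -> R) (l : R) :=
  forall e : R, 0 < e -> ev (fun k => `|w k - l| <= e).

Lemma cvP (R : realType) (w : nat -> R) (l : R) :
  w @ \oo --> l <-> cv w l.
Proof.
rewrite cvgrPdistC_le; split=> H e He; apply/evE; exact: H.
Qed.

Lemma inc_ge (phi : nat -> nat) : increasing_seq phi -> forall k, (k <= phi k)%N.
Proof.
move/increasing_seqP => H; elim=> [//|k IH].
by apply: leq_trans (H k); rewrite ltnS.
Qed.
Arguments ev_and {P Q}.
Arguments ev_ex {P}.
Arguments ev_mono {P Q}.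
Arguments ev_forall {I P}.

Section TopA.
Context {R : realType} {N : nat}.
Implicit Types (g : ('I_N -> R) -> ('I_N -> R)) (x y : 'I_N -> R).

Lemma top_shift g x c : topical g -> g (fun i => x i + c) = (fun i => g x i + c).
Proof. by case=> H _; rewrite H. Qed.

Lemma top_mono g x y : topical g -> (forall i, x i <= y i) -> forall i, g x i <= g y i.
Proof. by case=> _ H; apply: H. Qed.

Lemma top_le_shift g x y c : topical g ->
  (forall j, x j <= y j + c) -> forall j, g x j <= g y j + c.
Proof.
move=> tg H j; have := top_mono _ _ _ tg H j.
by rewrite (top_shift _ _ _ tg).
Qed.

Lemma iter_topical g k : topical g -> topical (iter k g).
Proof.
move=> tg; elim: k => [|k [IH1 IH2]]; first by split=> //= x y.
split=> [x h|x y Hxy i] /=.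
- by rewrite IH1 (top_shift _ _ _ tg).
- by apply: (top_mono _ _ _ tg); apply: IH2.
Qed.

Lemma topical_sub g b : topical g -> topical (fun x i => g x i - b).
Proof.
move=> tg; split=> [x h|x y Hxy i].
- by rewrite (top_shift _ _ _ tg); apply/funext => i; rewrite addrAC.
- by rewrite lerD2r; apply: (top_mono _ _ _ tg).
Qed.

Lemma iter_sub g b k x : topical g ->
  iter k (fun x i => g x i - b) x = (fun i => iter k g x i - k%:R * b).
Proof.
move=> tg; elim: k => [|k IH] /=; first by apply/funext => i; rewrite mul0r subr0.
rewrite IH; apply/funext => i.
rewrite (top_shift _ (fun i => iter k g x i) _ tg).
by rewrite -addrA -opprD mulrSr mulrDl mul1r addrC.
Qed.

End TopA.

Lemma bw_one (R : realType) (w : nat -> R) :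
  (forall m, `|w m| <= 1) ->
  exists psi : nat -> nat, (forall k, (k <= psi k)%N) /\ exists l, cv (fun k => w (psi k)) l.
Proof.
move=> Hw.
have bw : bounded_fun w.
  rewrite /= (@ex_bound nat R R w (globally setT) _).
    by exists 1 => t _; apply: Hw.
  exact: (@globally_properfilter nat setT 0%N I).
have [psi psi_inc cvw] := bolzano_weierstrass bw.
exists psi; split; first exact: inc_ge.
exists (limn (w \o psi)); apply/cvP; exact: cvw.
Qed.

Lemma bw_multi (R : realType) (N : nat) (u : nat -> 'I_N -> R) :
  (forall m i, `|u m i| <= 1) ->
  exists phi : nat -> nat, (forall k, (k <= phi k)%N) /\
    (forall i, exists l, cv (fun k => u (phi k) i) l).
Proof.
move=> Hu.
suff H : forall j, (j <= N)%N -> exists phi : nat -> nat, (forall k, (k <= phi k)%N) /\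
    (forall i : 'I_N, (i < j)%N -> exists l, cv (fun k => u (phi k) i) l).
  have [phi [H1 H2]] := H N (leqnn N).
  by exists phi; split=> // i; apply: H2.
elim=> [_|j IH Hj].
  by exists id; split=> // i.
have [phi [Hphi Hc]] := IH (ltnW Hj).
pose i0 : 'I_N := Ordinal Hj.
have [psi [Hpsi [l0 Hl0]]] := @bw_one _ (fun t => u (phi t) i0) (fun t => Hu (phi t) i0).
exists (phi \o psi); split.
  by move=> k /=; apply: leq_trans (Hpsi k) (Hphi _).
move=> i; rewrite ltnS leq_eqVlt => /orP[/eqP Hi|Hi].
  have -> : i = i0 by apply: val_inj.
  by exists l0.
have [l Hl] := Hc i Hi.
exists l => e He.
exact: (@ev_sub (fun k => `|u (phi k) i - l| <= e) psi Hpsi (Hl e He)).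
Qed.

Lemma le_bigmax_gen (R : realType) (I : finType) (F : I -> R) (a : R) (i : I) :
  F i <= \big[Num.max/a]_(j : I) F j.
Proof.
have : i \in index_enum I by rewrite mem_index_enum.
elim: (index_enum I) => [//|j s IH].
rewrite inE big_cons => /orP[/eqP->|/IH H]; rewrite le_max ?lexx //.
by rewrite H orbT.
Qed.

Lemma bigmax_att (R : realType) (I : finType) (F : I -> R) (a : R) :
  \big[Num.max/a]_(j : I) F j = a \/ exists i, \big[Num.max/a]_(j : I) F j = F i.
Proof.
apply: (big_ind (fun y => y = a \/ exists i, y = F i)); first by left.
- by move=> x y Hx Hy; case: (leP x y).
- by move=> j _; right; exists j.
Qed.

Lemma norm_le_sum (R : realType) (N : nat) (x : 'I_N -> R) (j : 'I_N) :
  `|x j| <= \sum_i `|x i|.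
Proof.
rewrite (bigD1 j) //= lerDl; apply: sumr_ge0 => i _; exact: normr_ge0.
Qed.

Section Core.
Variables (R : realType) (N : nat) (h : ('I_N -> R) -> 'I_N -> R).
Hypothesis th : topical h.
Hypothesis unb : forall C : R, exists k i, C < iter k h (fun _ => 0) i.

Let b k := iter k h (fun _ => 0).

Fixpoint U (m : nat) : 'I_N -> R :=
  match m with
  | 0 => fun _ => 0
  | m'.+1 => fun i => Num.max (U m' i) (b m'.+1 i)
  end.

Let M m := \big[Num.max/0]_(i : 'I_N) U m i.

Lemma U_ge_b m i : b m i <= U m i.
Proof. by case: m => [|m] /=; rewrite ?lexx // le_max lexx orbT. Qed.

Lemma U_S m i : U m i <= U m.+1 i.
Proof. by rewrite /= le_max lexx. Qed.

Lemma U_mono m m' i : (m <= m')%N -> U m i <= U m' i.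
Proof.
elim: m' => [|m' IH]; first by rewrite leqn0 => /eqP->.
rewrite leq_eqVlt => /orP[/eqP->//|]; rewrite ltnS => /IH H.
exact: le_trans H (U_S _ _).
Qed.

Lemma U_inv m i : U m i <= 0 \/ U m i <= h (U m) i.
Proof.
elim: m i => [|m IH] i; first by left.
have h1 : h (U m) i <= h (U m.+1) i by apply: (top_mono _ _ _ th) => j; exact: U_S.
have h2 : b m.+1 i <= h (U m.+1) i.
  rewrite /b /= -/(b m); apply: (top_mono _ _ _ th) => j.
  exact: le_trans (U_ge_b m j) (U_S _ _).
rewrite /=; case: (leP (b m.+1 i) (U m i)) => H.
- case: (IH i) => [->|H3]; first by left.
  by right; rewrite -/(U m.+1); exact: le_trans H3 h1.
- by right.
Qed.

Lemma U_le_M m i : U m i <= M m.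
Proof. exact: le_bigmax_gen. Qed.

Lemma U_ge0 m i : 0 <= U m i.
Proof. by elim: m i => [|m IH] i //=; rewrite le_max IH. Qed.

Lemma M_unb (C : R) : ev (fun m => C < M m).
Proof.
have [k [i Hk]] := unb C.
exists k => m Hm.
apply: lt_le_trans Hk _; apply: le_trans (U_ge_b k i) _.
apply: le_trans (U_le_M m i); exact: U_mono.
Qed.

Let V m := fun i => U m i - M m.

Lemma V_le0 m i : V m i <= 0.
Proof. by rewrite /V subr_le0 U_le_M. Qed.

Lemma V_inv m i : V m i <= - M m \/ V m i <= h (V m) i.
Proof.
rewrite /V (top_shift _ (U m) _ th).
case: (U_inv m i) => H; [left|right]; lra.
Qed.

Lemma V_zero m (i0 : 'I_N) : exists i, V m i = 0.
Proof.
case: (@bigmax_att R _ (U m) 0) => [H|[i Hi]].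
- exists i0; rewrite /V /M H subr0.
  by apply/eqP; rewrite eq_le U_ge0 andbT -H U_le_M.
- by exists i; rewrite /V /M Hi subrr.
Qed.


Lemma core_main : exists i (C : R), forall k, - C <= iter k h (fun _ => 0) i.
Proof.
have [k0 [i0 _]] := unb 0.
pose E m i := expR (V m i).
have HE m i : `|E m i| <= 1.
  rewrite ger0_norm ?(ltW (expR_gt0 _)) // -(expR0 R) ler_expR; exact: V_le0.
have [phi [Hphi He]] := @bw_multi R N E HE.
have [e He'] := boolp.choice He.
pose v i := ln (e i).
have Hpos i : 0 < e i -> cv (fun k => V (phi k) i) (v i).
  move=> Hi; apply/cvP.
  have c1 : (fun k => E (phi k) i) @ \oo --> e i by apply/cvP; exact: He' i.
  have c2 := continuous_cvg _ (continuous_ln Hi) c1.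
  suff -> : (fun k => V (phi k) i) = (@ln R) \o (fun k => E (phi k) i) by exact: c2.
  by apply/funext => k; rewrite /= /E expRK.
have Hneg i : ~~ (0 < e i) -> forall L, ev (fun k => V (phi k) i <= - L).
  move=> Hi L; have := He' i (expR (- L)) (expR_gt0 _).
  apply: ev_mono => k; rewrite ler_norml => /andP[_ Hk].
  rewrite -ler_expR; have : e i <= 0 by rewrite leNgt.
  rewrite /E in Hk; lra.
have Sne : exists i, 0 < e i.
  case: (boolP [exists i, 0 < e i]) => [/existsP //|/existsPn H].
  have : ev (fun k => forall i, `|E (phi k) i - e i| <= 1/2).
    apply: ev_forall => i; apply: He'; lra.
  case/ev_ex => k Hk.
  have [j Hj] := V_zero (phi k) i0.
  have := Hk j; have := H j; rewrite /E Hj expR0 -leNgt => Hej.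
  rewrite ler_norml => /andP[_ Hk']; lra.
pose Y (L : R) j := if 0 < e j then v j else - L.
have Hsup L i : 0 < e i -> v i <= h (Y L) i.
  move=> Hi; apply/ler_addgt0Pr => eta Heta.
  have He2 : 0 < eta / 2 by lra.
  have A : ev (fun k => forall j, V (phi k) j <= Y L j + eta/2).
    apply: ev_forall => j; rewrite /Y; case: ifP => Hj.
    - apply: ev_mono (Hpos j Hj _ He2) => k; rewrite ler_norml => /andP[_ Hk]; lra.
    - apply: ev_mono (Hneg j (negbT Hj) L) => k Hk; lra.
  have B := Hpos i Hi _ He2.
  have C : ev (fun k => eta/2 - v i < M (phi k)).
    exact: (@ev_sub (fun m => eta/2 - v i < M m) phi Hphi (M_unb _)).
  have [k [[Ak Bk] Ck]] := ev_ex (ev_and (ev_and A B) C).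
  move: Bk; rewrite ler_norml => /andP[Bk _].
  case: (V_inv (phi k) i) => Hv; first lra.
  have := top_le_shift _ _ _ _ th Ak i.
  lra.
pose D := \sum_j `|h (fun _ => 0) j|.
pose L0 := \sum_j `|v j|.
have D0 : 0 <= D by apply: sumr_ge0 => j _; exact: normr_ge0.
have L00 : 0 <= L0 by apply: sumr_ge0 => j _; exact: normr_ge0.
have vL j : `|v j| <= L0 by exact: norm_le_sum.
have Ystep L : L0 <= L -> forall j, Y (L + D) j <= h (Y L) j.
  move=> HL j; rewrite {1}/Y; case: ifP => Hj; first exact: Hsup.
  have H1 : forall j', (fun _ : 'I_N => - L) j' <= Y L j'.
    move=> j'; rewrite /Y; case: ifP => _ /=; last lra.
    have := vL j'; have := ler_norm (- v j'); rewrite normrN; lra.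
  have := top_mono _ _ _ th H1 j.
  have E1 : h (fun _ => - L) j = h (fun _ => 0) j - L.
    have := top_shift _ (fun _ : 'I_N => 0) (- L) th.
    by move=> /(congr1 (fun F => F j)) /=; rewrite add0r.
  rewrite E1.
  have := @norm_le_sum R N (h (fun _ => 0)) j; have := ler_norm (- h (fun _ => 0) j).
  rewrite normrN -/D; lra.
have Ychain k : forall j, Y (L0 + k%:R * D) j <= iter k h (Y L0) j.
  elim: k => [|k IH] j; first by rewrite mul0r addr0.
  rewrite iterS -natr1 mulrDl mul1r addrA.
  apply: le_trans (Ystep _ _ j) _.
    have : 0 <= k%:R * D by apply: mulr_ge0.
    lra.
  exact: (top_mono _ _ _ th IH).
have [i Hi] := Sne.
exists i, (L0 - v i) => k.
have H1 := Ychain k i; rewrite /Y Hi in H1.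
have H2 : forall j, Y L0 j <= 0 + L0.
  move=> j; rewrite /Y; case: ifP => _; last lra.
  have := vL j; have := ler_norm (v j); lra.
have := top_le_shift _ (Y L0) (fun _ => 0) L0 (iter_topical _ k th) H2 i.
lra.
Qed.

End Core.

Lemma archi_ev (R : realType) (C d : R) : 0 < d -> ev (fun k : nat => C <= k%:R * d).
Proof.
move=> d0.
have H0 : 0 <= `|C| / d by apply: divr_ge0 => //; exact: ltW.
have := archi_boundP H0; set K := Num.Def.archi_bound _ => HK.
exists K => k Hk.
have H1 : `|C| / d * d = `|C| by rewrite divfK // gt_eqF.
have H2 : (K%:R : R) <= k%:R by rewrite ler_nat.
have H3 : `|C| <= K%:R * d.
  by rewrite -H1; apply: ler_wpM2r; [exact: ltW | exact: ltW].
have H4 : K%:R * d <= k%:R * d by apply: ler_wpM2r => //; exact: ltW.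
have := ler_norm C; lra.
Qed.

Lemma close_from_bounds (R : realType) (w : nat -> R) (a : R) :
  (forall e, 0 < e -> exists C1 C2, forall k, k%:R * (a - e) - C1 <= w k /\ w k <= k%:R * (a + e) + C2) ->
  cv (fun k => w k / k%:R) a.
Proof.
move=> H e He.
have He2 : 0 < e / 2 by lra.
have [C1 [C2 HC]] := H _ He2.
have := ev_and (ev_and (@archi_ev R C1 _ He2) (@archi_ev R C2 _ He2)) (ev_ge 1).
apply: ev_mono => k [[H1 H2] Hk].
have kp : (0 : R) < k%:R by rewrite ltr0n.
have [L1 L2] := HC k.
have E1 : w k / k%:R - a = (w k - k%:R * a) / k%:R.
  by field; rewrite gt_eqF.
rewrite E1 normrM (ger0_norm (ltW (_ : 0 < k%:R^-1))); last by rewrite invr_gt0.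
rewrite ler_pdivrMr //.
rewrite ler_norml; apply/andP; split.
- have : k%:R * (a - e / 2) = k%:R * a - k%:R * (e / 2) by rewrite mulrBr.
  have : k%:R * e = 2 * (k%:R * (e / 2)) by field.
  lra.
- have : k%:R * (a + e / 2) = k%:R * a + k%:R * (e / 2) by rewrite mulrDr.
  have : k%:R * e = 2 * (k%:R * (e / 2)) by field.
  lra.
Qed.

Lemma norm_sum_ge0 (R : realType) (N : nat) (x : 'I_N -> R) : 0 <= \sum_i `|x i|.
Proof. by apply: sumr_ge0 => j _; exact: normr_ge0. Qed.

Lemma traj_close (R : realType) (N : nat) (g : ('I_N -> R) -> 'I_N -> R) (y : 'I_N -> R) k i :
  topical g -> `|iter k g y i - iter k g (fun _ => 0) i| <= \sum_j `|y j|.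
Proof.
move=> tg; have tk := iter_topical _ k tg.
have H1 : forall j, y j <= (fun _ : 'I_N => 0) j + \sum_j `|y j|.
  move=> j /=; have := @norm_le_sum R N y j; have := ler_norm (y j); lra.
have H2 : forall j, (fun _ : 'I_N => 0) j <= y j + \sum_j `|y j|.
  move=> j /=; have := @norm_le_sum R N y j; have := ler_norm (- y j); rewrite normrN; lra.
have := top_le_shift _ _ _ _ tk H1 i; have := top_le_shift _ _ _ _ tk H2 i.
rewrite ler_norml; lra.
Qed.

Lemma traj_bound (R : realType) (N : nat) (g : ('I_N -> R) -> 'I_N -> R) k i :
  topical g -> `|iter k g (fun _ => 0) i| <= k%:R * \sum_j `|g (fun _ => 0) j|.
Proof.
move=> tg; set M0 := \sum_j _.
elim: k i => [|k IH] i; first by rewrite /= normr0 mul0r.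
rewrite iterS -natr1 mulrDl mul1r.
have H1 : forall j, iter k g (fun _ => 0) j <= (fun _ : 'I_N => 0) j + k%:R * M0.
  by move=> j /=; have := IH j; rewrite ler_norml; lra.
have H2 : forall j, (fun _ : 'I_N => 0) j <= iter k g (fun _ => 0) j + k%:R * M0.
  by move=> j /=; have := IH j; rewrite ler_norml; lra.
have A1 := top_le_shift _ _ _ _ tg H1 i; have A2 := top_le_shift _ _ _ _ tg H2 i.
have A3 := @norm_le_sum R N (g (fun _ => 0)) i; rewrite -/M0 in A3.
have A4 := ler_norm (g (fun _ => 0) i); have A5 := ler_norm (- g (fun _ => 0) i).
rewrite normrN in A5.
rewrite ler_norml; apply/andP; split; lra.
Qed.

Theorem corollary2p5 (R : realType) (n : nat)
    (f : ('I_n.+1 -> R) -> ('I_n.+1 -> R)) :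
  topical f ->
  exists i : 'I_n.+1, forall y : 'I_n.+1 -> R,
    (fun k : nat => iter k f y i / k%:R) @ \oo --> upper_cycle_time f.
Proof.
move=> tf.
pose M0 := \sum_j `|f (fun _ => 0) j|.
have Hb k i : `|iter k f (fun _ => 0) i| <= k%:R * M0 := @traj_bound R n.+1 f k i tf.
have M00 : 0 <= M0 by exact: norm_sum_ge0.
pose A i := [set β : R | exists C, forall k, k%:R * β - C <= iter k f (fun _ => 0) i].
have hsA i : has_sup (A i).
  split.
  - exists (- M0); exists 0 => k; have := Hb k i; rewrite ler_norml => /andP[H _].
    rewrite subr0 mulrN; lra.
  - exists (M0 + 1) => β [C HC].
    rewrite leNgt; apply/negP => Hlt.
    have d0 : 0 < β - M0 by lra.
    have [k Hk] := ev_ex (@archi_ev R (C + 1) _ d0).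
    have := HC k; have := Hb k i; rewrite ler_norml => /andP[_ H2] H3.
    have : k%:R * (β - M0) = k%:R * β - k%:R * M0 by rewrite mulrBr.
    lra.
pose al i := sup (A i).
have supub i β : A i β -> β <= al i := fun H => sup_upper_bound (hsA i) H.
have supad i e : 0 < e -> exists2 β, A i β & al i - e < β := fun He => sup_adherent He (hsA i).
have [istar Histar] : exists i, forall j, al j <= al i.
  case: (@bigmax_att R _ al (al ord0)) => [H|[i H]]; [exists ord0|exists i] => j;
    rewrite -H; exact: le_bigmax_gen.
have Low e : 0 < e -> exists C, forall k, k%:R * (al istar - e) - C <= iter k f (fun _ => 0) istar.
  move=> He; have [β [C HC] Hβ] := supad istar e He.
  exists C => k; have := HC k.
  have : k%:R * (al istar - e) <= k%:R * β by apply: ler_wpM2l; [exact: ler0n| lra].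
  lra.
have Up e : 0 < e -> exists C, forall k j, iter k f (fun _ => 0) j <= k%:R * (al istar + e) + C.
  move=> He.
  pose h := fun (x : 'I_n.+1 -> R) i => f x i - (al istar + e).
  have th : topical h := topical_sub _ (al istar + e) tf.
  have Eh k i : iter k h (fun _ => 0) i = iter k f (fun _ => 0) i - k%:R * (al istar + e).
    by rewrite /h (iter_sub _ _ _ _ tf).
  have : exists C, forall k j, iter k h (fun _ => 0) j <= C.
    apply: contrapT => Hn.
    have unb : forall C, exists k i, C < iter k h (fun _ => 0) i.
      move=> C; apply: contrapT => Hn2; apply: Hn; exists C => k j.
      rewrite leNgt; apply/negP => Hlt; apply: Hn2; by exists k, j.
    have [i [C Hi]] := @core_main R n.+1 h th unb.
    have Gi : A i (al istar + e) by exists C => k; have := Hi k; rewrite Eh; lra.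
    have := supub i _ Gi; have := Histar i; lra.
  case=> C HC; exists C => k j; have := HC k j; rewrite Eh; lra.
exists istar => y.
have cvY : cv (fun k => iter k f y istar / k%:R) (al istar).
  apply: close_from_bounds => e He.
  have [C1 H1] := Low e He; have [C2 H2] := Up e He.
  exists (C1 + \sum_j `|y j|), (C2 + \sum_j `|y j|) => k.
  have := @traj_close R n.+1 f y k istar tf; rewrite ler_norml => /andP[T1 T2].
  have := H1 k; have := H2 k istar;   split; lra.
have cvV : cv (fun k => vmax (iter k f (fun _ => 0)) / k%:R) (al istar).
  apply: close_from_bounds => e He.
  have [C1 H1] := Low e He; have [C2 H2] := Up e He.
  exists C1, C2 => k; rewrite /vmax.
  have V1 := @le_bigmax_gen R _ (iter k f (fun _ => 0)) (iter k f (fun _ => 0) ord0) istar.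
  have V2 : exists j, \big[Num.max/iter k f (fun _ => 0) ord0]_(i < n.+1) iter k f (fun _ => 0) i
      = iter k f (fun _ => 0) j.
    by case: (@bigmax_att R _ (iter k f (fun _ => 0)) (iter k f (fun _ => 0) ord0)) => [H|[j H]];
      [exists ord0|exists j].
  case: V2 => j Hj; rewrite Hj; rewrite Hj in V1.
  have := H1 k; have := H2 k j; split; lra.
have Hut : upper_cycle_time f = al istar.
  rewrite /upper_cycle_time; apply: cvg_lim => //; apply/cvP; exact: cvV.
rewrite Hut; apply/cvP; exact: cvY.
Qed.
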